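(* With the notation of the context, writing $\mathbf 1=\mathbf 1_{\{|k_1+k_3|<|k_2|\}}$, $$\|\mathbf 1\,\mathrm T^{{\rm b},m}\|^2_{kk_1k_2k_3}\lesssim N_1N_3,\qquad \|\mathbf 1\,\mathrm T^{{\rm b},m}\|^2_{kk_2\to k_1k_3}\lesssim(N_1\wedge N_3)^{1-\frac\alpha2},$$ $$\|\mathbf 1\,\mathrm T^{{\rm b},m}\|^2_{k_1\to kk_2k_3}\lesssim N_3,\qquad \|\mathbf 1\,\mathrm T^{{\rm b},m}\|^2_{k_3\to kk_1k_2}\lesssim N_1.$$
   Context: Fix $\alpha\in(1,2)$, dyadic numbers $1\le N_1,N_2,N_3\le N$, a real number $m$ and a constant $C_0>0$. Let $S$ be the set of $(k,k_1,k_2,k_3)\in\mathbb Z^4$ with $k=k_1-k_2+k_3$, $k_2\notin\{k_1,k_3\}$, $\big||k_1|^\alpha-|k_2|^\alpha+|k_3|^\alpha-|k|^\alpha-m\big|\le C_0$, $|k|\le N$ and $|k_j|\le N_j$ for $j=1,2,3$. The base tensor is $\mathrm T^{{\rm b},m}_{kk_1k_2k_3}=\mathbf 1_S(k,k_1,k_2,k_3)$. For a tensor $H=H_{k_A}$ indexed by $k_A=(k_j)_{j\in A}\in\mathbb Z^A$ and a partition $(B,C)$ of $A$, $\|H\|_{k_B\to k_C}^2=\sup\{\sum_{k_C}|\sum_{k_B}H_{k_A}z_{k_B}|^2:\sum_{k_B}|z_{k_B}|^2=1\}$ (the $\ell^2_{k_B}\to\ell^2_{k_C}$ operator norm); $\|H\|_{k_A}$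 denotes the $\ell^2_{k_A}$ norm. $a\wedge b=\min(a,b)$. $A\lesssim B$ means $A\le CB$ with $C$ depending only on $\alpha$ and $C_0$. *)

(* Defs.v *)
From HB Require Import structures.
From mathcomp Require Import all_boot all_order all_algebra.
From mathcomp Require Import all_classical all_reals all_analysis.
Set Implicit Arguments. Unset Strict Implicit. Unset Printing Implicit Defensive.
Import Order.TTheory GRing.Theory Num.Theory.
Local Open Scope ring_scope.

Definition dyadic (n : nat) : Prop := exists j : nat, n = (2 ^ j)%N.

Definition zsum {R : realType} (n : nat) (f : int -> R) : R :=
  \sum_(i < (2 * n).+1) f (i%:Z - n%:Z).

(* |k|^alpha for an integer k (with 0^alpha = 0 for alpha > 0). *)
Definition apow {R : realType} (alpha : R) (k : int) : R :=
  ((`|k|%:~R : R) `^ alpha).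

Definition inS {R : realType} (alpha C0 m : R) (N N1 N2 N3 : nat)
  (k k1 k2 k3 : int) : bool :=
  [&& k == k1 - k2 + k3, k2 != k1, k2 != k3,
      `| apow alpha k1 - apow alpha k2 + apow alpha k3 - apow alpha k - m | <= C0,
      (absz k <= N)%N, (absz k1 <= N1)%N, (absz k2 <= N2)%N & (absz k3 <= N3)%N].

Definition Tb {R : realType} (alpha C0 m : R) (N N1 N2 N3 : nat)
  (k k1 k2 k3 : int) : R :=
  if inS alpha C0 m N N1 N2 N3 k k1 k2 k3 then 1 else 0.

Definition Tr {R : realType} (alpha C0 m : R) (N N1 N2 N3 : nat)
  (k k1 k2 k3 : int) : R :=
  (if (absz (k1 + k3)%R < absz k2)%N then 1 else 0) * Tb alpha C0 m N N1 N2 N3 k k1 k2 k3.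

(* Main.v *)
Require Import Defs.
From HB Require Import structures.
From mathcomp Require Import all_boot all_order all_algebra.
From mathcomp Require Import all_classical all_reals all_analysis.
Import Order.TTheory GRing.Theory Num.Theory.
Local Open Scope ring_scope.
Import numFieldNormedType.Exports.
From mathcomp Require Import ring lra zify.

Section Z.
Variable R : realType.

Definition ind (b : bool) : R := if b then 1 else 0.

Lemma zsum_le n (f g : int -> R) : (forall x, f x <= g x) -> zsum n f <= zsum n g.
Proof. by move=> h; apply: ler_sum => i _; apply: h. Qed.

Lemma zsum_ge0 n (f : int -> R) : (forall x, 0 <= f x) -> 0 <= zsum n f.
Proof. by move=> h; apply: sumr_ge0 => i _; apply: h. Qed.

Lemma zsumD n (f g : int -> R) : zsum n (fun x => f x + g x) = zsum n f + zsum n g.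
Proof. by rewrite /zsum big_split. Qed.

Lemma zsumZ n c (f : int -> R) : zsum n (fun x => c * f x) = c * zsum n f.
Proof. by rewrite /zsum mulr_sumr. Qed.

Lemma zsum_cst n (c : R) : zsum n (fun _ => c) = (2 * n).+1%:R * c.
Proof. by rewrite /zsum sumr_const card_ord mulr_natl. Qed.

Lemma zsum_swap n1 n2 (F : int -> int -> R) :
  zsum n1 (fun x => zsum n2 (fun y => F x y)) = zsum n2 (fun y => zsum n1 (fun x => F x y)).
Proof. by rewrite /zsum exchange_big. Qed.

Lemma zsum_single n (e : int) : zsum n (fun x => ind (x == e)) <= 1.
Proof.
rewrite /zsum.
case: (pickP (fun i : 'I_(2 * n).+1 => (i%:Z - n%:Z == e))) => [i0 Hi0 | none].
  rewrite (bigD1 i0) //= /ind Hi0 big1 ?addr0 // => i ne.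
  case: eqP => // H; exfalso; move/eqP: Hi0 => Hi0.
  move/negP: ne; apply; apply/eqP; apply: val_inj => /=; lia.
by rewrite big1 // => i _; rewrite /ind none.
Qed.

Lemma zsum_window n (x0 : int) (d : nat) :
  zsum n (fun x => ind (`|x - x0| <= d%:Z)) <= (2 * d).+1%:R.
Proof.
elim: d => [|d IH].
  apply: le_trans (zsum_single n x0).
  apply: zsum_le => x; rewrite /ind.
  by case: ifP => h; case: ifP => h2 //; exfalso; move: h h2; case: eqP => //; lia.
apply: (@le_trans _ _ (zsum n (fun x => ind (`|x - x0| <= d%:Z) + ind (x == x0 + d.+1%:Z) + ind (x == x0 - d.+1%:Z)))).
  apply: zsum_le => x; rewrite /ind.
  case: ifP => h1; case: ifP => h2; case: ifP => h3; case: ifP => h4;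
   move: h1 h2 h3 h4; try (do 2 case: eqP); try lra; lia.
rewrite !zsumD.
have := zsum_single n (x0 + d.+1%:Z); have := zsum_single n (x0 - d.+1%:Z).
rewrite (_ : (2 * d.+1).+1 = (2 * d).+1 + 2)%N; last by lia.
rewrite natrD. lra.
Qed.


Lemma zsum_diam n (P : int -> bool) (D : R) : 0 <= D ->
  (forall x y, P x -> P y -> (x <= y)%R -> (y - x)%:~R <= D) ->
  zsum n (fun x => ind (P x)) <= 2 * D + 1.
Proof.
move=> D0 hP.
have [[x0 Px0]|none] := pselect (exists x0, P x0); last first.
  rewrite (_ : zsum _ _ = zsum n (fun _ => 0)); last first.
    rewrite /zsum; apply: eq_bigr => i _; rewrite /ind; case: ifP => // h.
    by exfalso; apply: none; exists (i%:Z - n%:Z).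
  by rewrite zsum_cst mulr0; lra.
set d := Num.trunc D.
have dD : d%:R <= D by rewrite truncn_le.
apply: (@le_trans _ _ ((2 * d).+1%:R)); last first.
  by rewrite -addn1 natrD natrM; lra.
apply: le_trans (zsum_window n x0 d).
apply: zsum_le => x; rewrite /ind.
case: ifP => Px //; case: ifP => // h; exfalso; move/negP: h; apply.
have key : forall u v, P u -> P v -> (u <= v)%R -> (v - u <= d%:Z)%R.
  move=> u v Pu Pv uv.
  have := hP u v Pu Pv uv.
  have [m em] : exists m : nat, v - u = m%:Z by exists `|v - u|%N; rewrite gez0_abs // subr_ge0.
  rewrite em => hm.
  have : (m <= d)%N by rewrite truncn_ge_nat // -pmulrn.
  by rewrite -lez_nat.
have [x0x|xx0] := lerP x0 x.
  have := key _ _ Px0 Px x0x; lia.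
have := key _ _ Px Px0 (ltW xx0); lia.
Qed.

Lemma CS (I : finType) (w z : I -> R) : (forall i, 0 <= w i) ->
  (\sum_i w i * z i) ^+ 2 <= (\sum_i w i) * (\sum_i w i * z i ^+ 2).
Proof.
move=> w0.
set W := \sum_i w i; set A := \sum_i w i * z i; set B := \sum_i w i * z i ^+ 2.
have W0 : 0 <= W by apply: sumr_ge0 => i _.
have [We|Wp] := eqVneq W 0.
  have wz : forall i, w i = 0.
    move=> i; move/eqP: We; rewrite psumr_eq0 => [/allP h|j _]; last exact: w0.
    by apply/eqP; apply: h; rewrite mem_index_enum.
  rewrite We mul0r /A big1 ?expr0n // => i _; by rewrite wz mul0r.
have Wpos : 0 < W by rewrite lt_def Wp W0.
have e : \sum_i w i * (W * z i - A) ^+ 2 = W * (W * B - A ^+ 2).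
  rewrite (eq_bigr (fun i => W ^+ 2 * (w i * z i ^+ 2) - (2 * W * A) * (w i * z i) + A ^+ 2 * w i)); last by move=> i _; ring.
  rewrite big_split /= sumrB -!mulr_sumr -/A -/B -/W; ring.
have h1 : 0 <= W * (W * B - A ^+ 2).
  by rewrite -e; apply: sumr_ge0 => i _; apply: mulr_ge0 => //; apply: sqr_ge0.
have h2 : 0 <= W * B - A ^+ 2 by move: h1; rewrite pmulr_rge0.
by move: h2; rewrite subr_ge0.
Qed.

Lemma zCS1 n (w z : int -> R) : (forall i, 0 <= w i) ->
  (zsum n (fun x => w x * z x)) ^+ 2 <= zsum n w * zsum n (fun x => w x * z x ^+ 2).
Proof. by move=> h; rewrite /zsum; apply: (@CS _ (fun i : 'I_(2 * n).+1 => w (i%:Z - n%:Z)) (fun i => z (i%:Z - n%:Z))). Qed.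

Lemma zCS2 n1 n2 (w z : int -> int -> R) : (forall i j, 0 <= w i j) ->
  (zsum n1 (fun x => zsum n2 (fun y => w x y * z x y))) ^+ 2 <=
  zsum n1 (fun x => zsum n2 (fun y => w x y)) *
  zsum n1 (fun x => zsum n2 (fun y => w x y * z x y ^+ 2)).
Proof.
move=> h; rewrite /zsum !pair_big /=.
exact: (@CS _ (fun p : 'I_(2 * n1).+1 * 'I_(2 * n2).+1 => w (p.1%:Z - n1%:Z) (p.2%:Z - n2%:Z)) (fun p => z (p.1%:Z - n1%:Z) (p.2%:Z - n2%:Z))).
Qed.

End Z.

Section S.
Variable R : realType.

Lemma shift_derive (a x : R) : 0 < x + 1 ->
  is_derive x 1 (fun t : R => (t + 1) `^ a) (a * (x + 1) `^ (a - 1)).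
Proof.
move=> hx.
have -> : (fun t : R => (t + 1) `^ a) = (@powR R ^~ a) \o (fun t => t + 1) by [].
rewrite -[X in is_derive _ _ _ X]mulr1.
apply: is_derive1_comp; first exact: is_derive1_powR.
rewrite -[X in is_derive _ _ _ X]addr0. apply: is_deriveD.
Qed.

Lemma powR_anti (x y e : R) : 0 < x -> x <= y -> e <= 0 -> y `^ e <= x `^ e.
Proof.
move=> x0 xy e0.
have hy : 0 < y by apply: lt_le_trans xy.
have ex : forall z : R, z `^ e = (z `^ (- e))^-1 by move=> z; rewrite -powRN opprK.
rewrite !ex lef_pV2 ?posrE ?powR_gt0 //.
have h := @ge0_ler_powR R (- e); apply: (h _ x y) => //; rewrite ?oppr_ge0 ?inE ?nnegrE //; exact: ltW.
Qed.

Lemma Delta (a x : R) : 1 < a -> a < 2 -> 0 < x ->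
  a * (a - 1) * (x + 2) `^ (a - 2) <=
  ((x + 2) `^ a - (x + 1) `^ a) - ((x + 1) `^ a - x `^ a).
Proof.
move=> a1 a2 x0.
pose g := fun t : R => (t + 1) `^ a - t `^ a.
pose dg := fun t : R => a * (t + 1) `^ (a - 1) - a * t `^ (a - 1).
have hder : forall t : R, 0 < t -> is_derive t (1:R) g (dg t).
  move=> t t0; apply: is_deriveB; first by apply: shift_derive; rewrite addr_gt0.
  exact: is_derive1_powR.
have xx1 : x < x + 1 by rewrite ltrDl.
have [c cI gc] : exists2 c, c \in `]x, x + 1[ & g (x + 1) - g x = dg c * (x + 1 - x).
  apply: MVT => //.
    move=> t; rewrite in_itv /= => /andP[xt _]; apply: hder; exact: lt_trans xt.
  apply: derivable_within_continuous => t; rewrite in_itv /= => /andP[xt _].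
  by have [] := hder t (lt_le_trans x0 xt).
move: cI; rewrite in_itv /= => /andP[xc cx1].
have c0 : 0 < c by apply: lt_trans xc.
have cc1 : c < c + 1 by rewrite ltrDl.
have [d dI pd] : exists2 d, d \in `]c, c + 1[ &
   (@powR R ^~ (a - 1)) (c + 1) - (@powR R ^~ (a - 1)) c = ((a - 1) * d `^ (a - 1 - 1)) * (c + 1 - c).
  apply: (@MVT R (@powR R ^~ (a - 1)) (fun t => (a - 1) * t `^ (a - 1 - 1)) c (c + 1)) => //.
    move=> t; rewrite in_itv /= => /andP[ct _]; apply: is_derive1_powR; exact: lt_trans ct.
  apply: derivable_within_continuous => t; rewrite in_itv /= => /andP[ct _].
  by have [] := is_derive1_powR (a - 1) (lt_le_trans c0 ct).
move: dI; rewrite in_itv /= => /andP[cd dc1].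
have d0 : 0 < d by apply: lt_trans cd.
have dx2 : d <= x + 2.
  apply: ltW; apply: (lt_le_trans dc1). have : c + 1 <= x + 1 + 1 by rewrite lerD2r ltW. by rewrite -addrA (_ : (1 + 1 : R) = 2).
have e : g (x + 1) - g x = a * ((a - 1) * d `^ (a - 2)).
  rewrite gc /dg /= in pd *. rewrite (_ : a - 2 = a - 1 - 1); last by ring.
  have e1 : c + 1 - c = 1 by ring. have e2 : x + 1 - x = 1 by ring.
  rewrite e1 mulr1 in pd; rewrite e2 mulr1 -pd; ring.
have -> : ((x + 2) `^ a - (x + 1) `^ a) - ((x + 1) `^ a - x `^ a) = g (x + 1) - g x.
  by rewrite /g (_ : x + 1 + 1 = x + 2) //; ring.
rewrite e mulrA ler_wpM2l //.
  by apply: mulr_ge0; [apply: ltW; apply: lt_trans a1 | rewrite subr_ge0 ltW].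
apply: powR_anti => //. by rewrite subr_le0 ltW.
Qed.

Lemma two_pow_gt (a : R) : 1 < a -> 2 < 2 `^ a.
Proof.
move=> a1.
have l2 : 0 < ln (2 : R) by apply: ln_gt0; rewrite ltr1n.
rewrite /powR (negbTE (_ : (2:R) != 0)) //.
rewrite -{1}(@lnK R 2) ?posrE // ltr_expR.
by rewrite -{1}(mul1r (ln 2)) ltr_pM2r.
Qed.

Lemma one_powR (x : R) : 1 `^ x = 1.
Proof. by have := congr1 (fun f => f x) (@powR1 R). Qed.

Variable a : R.
Hypothesis a1 : 1 < a.
Hypothesis a2 : a < 2.

Definition kc : R := Num.min (a * (a - 1)) (Num.min (2 `^ a - 2) 1).

Lemma kc_gt0 : 0 < kc.
Proof.
rewrite /kc !lt_min; apply/and3P; split.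
- by apply: mulr_gt0; [apply: lt_trans a1 | rewrite subr_gt0].
- by rewrite subr_gt0 two_pow_gt.
- by [].
Qed.

Lemma kc_le1 : kc <= 1.
Proof. by rewrite /kc !ge_min lexx !orbT. Qed.

Definition Dr (t : R) := (t + 1) `^ a - t `^ a.

Lemma Dr0 : Dr 0 = 1.
Proof. by rewrite /Dr add0r one_powR powR0 ?subr0 // gt_eqF // (lt_trans _ a1). Qed.

Lemma Dstep (n : nat) : kc * (n%:R + 2) `^ (a - 2) <= Dr n.+1%:R - Dr n%:R.
Proof.
have e : Dr n.+1%:R - Dr n%:R =
   ((n%:R + 2) `^ a - (n%:R + 1) `^ a) - ((n%:R + 1) `^ a - n%:R `^ a).
  by rewrite /Dr -natr1 (_ : n%:R + 1 + 1 = n%:R + 2 :> R) //; ring.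
rewrite e; case: n e => [|n] e.
  rewrite mulr0n !add0r one_powR powR0 ?gt_eqF ?(lt_trans _ a1) // subr0.
  apply: (@le_trans _ _ kc).
    rewrite -[X in _ <= X]mulr1; apply: (ler_wpM2l (ltW kc_gt0)).
    have h : (2:R) `^ (a - 2) <= 1 `^ (a - 2).
      by apply: powR_anti => //; [rewrite ler1n | rewrite subr_le0 ltW].
    by rewrite one_powR in h.
  rewrite -addrA (_ : (-1 - 1 : R) = -2); last by ring.
  by rewrite /kc !ge_min lexx !orbT.
have hD := @Delta a n.+1%:R a1 a2 (ltr0Sn _ _).
apply: le_trans hD.
apply: ler_wpM2r; first exact: powR_ge0.
by rewrite /kc ge_min lexx.
Qed.

Lemma Dsum (q k : nat) :
  kc * k%:R * ((q + k)%:R + 1) `^ (a - 2) <= Dr (q + k)%:R - Dr q%:R.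
Proof.
elim: k => [|k IH]; first by rewrite mulr0 mul0r addn0 subrr.
have hs := Dstep (q + k).
rewrite addnS.
have -> : Dr (q + k).+1%:R - Dr q%:R = (Dr (q + k).+1%:R - Dr (q+k)%:R) + (Dr (q + k)%:R - Dr q%:R) by ring.
have e1 : ((q + k).+1%:R + 1 : R) = (q + k)%:R + 2 by rewrite -natr1; ring.
rewrite e1 -natr1 mulrDr mulr1 mulrDl.
rewrite [X in X <= _]addrC; apply: lerD => //.
apply: le_trans IH.
rewrite ler_wpM2l //.
  by apply: mulr_ge0; [exact: ltW kc_gt0 | exact: ler0n].
apply: powR_anti; first by rewrite ltr_pwDr // ler0n.
  by rewrite lerD2l ler1n.
by rewrite subr_le0 ltW.
Qed.

Definition Fz (p : int) : R := (p%:~R : R) `^ a.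
Definition DZ (p : int) : R := Fz (p + 1) - Fz p.
Definition phi (s z : int) : R := apow a z + apow a (s - z).

Lemma apow_pos k : (0 <= k)%R -> apow a k = Fz k.
Proof. by move=> k0; rewrite /apow /Fz ger0_norm. Qed.
Lemma apow_neg k : (k <= 0)%R -> apow a k = Fz (- k).
Proof. by move=> k0; rewrite /apow /Fz ler0_norm. Qed.

Lemma DZ_Dr (p : int) : DZ p = Dr p%:~R.
Proof. by rewrite /DZ /Dr /Fz intrD. Qed.

Lemma Dint (p q : int) : (0 <= q)%R -> (q <= p)%R ->
  kc * (p - q)%:~R * (p%:~R + 1) `^ (a - 2) <= DZ p - DZ q.
Proof.
move=> q0 qp.
have [qn eq] : exists qn : nat, q = qn%:Z by exists `|q|%N; rewrite gez0_abs.
have [kn ek] : exists kn : nat, p - q = kn%:Z.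
  by exists `|p - q|%N; rewrite gez0_abs // subr_ge0.
have ep : p = (qn + kn)%N%:Z by rewrite PoszD -eq -ek; ring.
rewrite ek ep !DZ_Dr eq.
have := Dsum qn kn.
by rewrite !pmulrn.
Qed.

Lemma PR_le1 (x : R) : 1 <= x -> x `^ (a - 2) <= 1.
Proof.
move=> x1; have h : x `^ (a - 2) <= 1 `^ (a - 2).
  by apply: powR_anti => //; rewrite subr_le0 ltW.
by rewrite one_powR in h.
Qed.

Lemma step_pos (s z : int) : (0 < 2 * z + 1 - s)%R ->
  kc * (2 * z + 1 - s)%:~R * ((`|z + 1| + `|s - z| + 1)%:~R) `^ (a - 2)
  <= phi s (z + 1) - phi s z.
Proof.
move=> hpos.
set Rz := ((`|z + 1| + `|s - z| + 1)%:~R : R).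
have c0 : 0 <= kc by exact: ltW kc_gt0.
have anti : forall p : int, (0 <= p)%R -> (p + 1 <= `|z + 1| + `|s - z| + 1)%R ->
   Rz `^ (a - 2) <= (p%:~R + 1) `^ (a - 2).
  move=> p p0 pR; rewrite (_ : p%:~R + 1 = (p + 1)%:~R :> R); last by rewrite intrD.
  apply: powR_anti.
  - by rewrite ltr0z; lia.
  - by rewrite /Rz ler_int.
  - by rewrite subr_le0 ltW.
have Rz1 : 1 <= Rz by rewrite /Rz ler1z; lia.
have [z0|zn] := lerP 0 z.
  have [sz1|sz0] := lerP 1 (s - z).
    have e : phi s (z + 1) - phi s z = DZ z - DZ (s - z - 1).
      rewrite /phi /DZ !apow_pos; try lia.
      rewrite (_ : s - (z + 1) = s - z - 1); last by ring.
      rewrite (_ : s - z - 1 + 1 = s - z); last by ring.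
      ring.
    rewrite e.
    have h := Dint (z) (s - z - 1) ltac:(lia) ltac:(lia).
    rewrite (_ : z - (s - z - 1) = 2 * z + 1 - s) in h; last by ring.
    apply: le_trans h.
    apply: ler_wpM2l; first by apply: mulr_ge0 => //; rewrite ler0z; lia.
    apply: anti; lia.
  have e : phi s (z + 1) - phi s z = DZ z + DZ (z - s).
    rewrite /phi /DZ (apow_pos (z + 1)); last by lia.
    rewrite (apow_pos (z)); last by lia.
    rewrite (apow_neg (s - (z + 1))); last by lia.
    rewrite (apow_neg (s - z)); last by lia.
    rewrite (_ : - (s - (z + 1)) = z - s + 1); last by ring.
    rewrite (_ : - (s - z) = z - s); last by ring.
    ring.
  rewrite e.
  have h1 := Dint (z) (0) ltac:(lia) ltac:(lia).
  have h2 := Dint (z - s) (0) ltac:(lia) ltac:(lia).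
  have d0 : DZ 0 = 1 by rewrite DZ_Dr Dr0.
  rewrite d0 !subr0 in h1 h2.
  have P1 : Rz `^ (a - 2) <= 1 by apply: PR_le1.
  have P0 : 0 <= Rz `^ (a - 2) by apply: powR_ge0.
  have k1 : kc * z%:~R * Rz `^ (a - 2) <= kc * z%:~R * (z%:~R + 1) `^ (a - 2).
    apply: ler_wpM2l; first by apply: mulr_ge0 => //; rewrite ler0z.
    apply: anti; lia.
  have k2 : kc * (z - s)%:~R * Rz `^ (a - 2) <= kc * (z - s)%:~R * ((z - s)%:~R + 1) `^ (a - 2).
    apply: ler_wpM2l; first by apply: mulr_ge0 => //; rewrite ler0z; lia.
    apply: anti; lia.
  have k3 : kc * Rz `^ (a - 2) <= 1.
    by have := ler_pM c0 P0 kc_le1 P1; rewrite mulr1.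
  have ee : kc * (2 * z + 1 - s)%:~R * Rz `^ (a - 2) =
     kc * z%:~R * Rz `^ (a - 2) + kc * (z - s)%:~R * Rz `^ (a - 2) + kc * Rz `^ (a - 2).
    rewrite (_ : 2 * z + 1 - s = z + (z - s) + 1); last by ring.
    rewrite !intrD; ring.
  rewrite ee; lra.
have e : phi s (z + 1) - phi s z = DZ (z - s) - DZ (- z - 1).
  rewrite /phi /DZ (apow_neg (z + 1)); last by lia.
  rewrite (apow_neg (z)); last by lia.
  rewrite (apow_neg (s - (z + 1))); last by lia.
  rewrite (apow_neg (s - z)); last by lia.
  rewrite (_ : - (s - (z + 1)) = z - s + 1); last by ring.
  rewrite (_ : - (s - z) = z - s); last by ring.
  rewrite (_ : - (z + 1) = - z - 1); last by ring.
  rewrite (_ : - z - 1 + 1 = - z); last by ring.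
  ring.
rewrite e.
have h := Dint (z - s) (- z - 1) ltac:(lia) ltac:(lia).
rewrite (_ : z - s - (- z - 1) = 2 * z + 1 - s) in h; last by ring.
apply: le_trans h.
apply: ler_wpM2l; first by apply: mulr_ge0 => //; rewrite ler0z; lia.
apply: anti; lia.
Qed.
End S.


Section T.
Variable R : realType.
Variable a : R.
Hypothesis a1 : 1 < a.
Hypothesis a2 : a < 2.

Lemma chain (g : int -> R) (d : R) (n : nat) (x : int) :
  (forall z, (x <= z)%R -> (z < x + n%:Z)%R -> d <= g (z + 1) - g z) ->
  n%:R * d <= g (x + n%:Z) - g x.
Proof.
elim: n => [|n IH] h; first by rewrite mul0r addr0 subrr.
have h1 := IH (fun z xz zl => h z xz ltac:(lia)).
have h2 := h (x + n%:Z) ltac:(lia) ltac:(lia).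
rewrite (_ : x + n.+1%:Z = x + n%:Z + 1); last by lia.
rewrite -natr1 mulrDl mul1r. lra.
Qed.

Lemma diam_g (g : int -> R) (d C : R) (x y : int) : 0 < d -> (x <= y)%R ->
  (forall z, (x <= z)%R -> (z < y)%R -> d <= g (z + 1) - g z) ->
  g y - g x <= C -> (y - x)%:~R <= C / d.
Proof.
move=> d0 xy h hC.
have [n en] : exists n : nat, y - x = n%:Z by exists `|y - x|%N; rewrite gez0_abs // subr_ge0.
have ey : y = x + n%:Z by rewrite -en; ring.
have := chain g d n x.
rewrite -ey => hc.
have hc' := hc (fun z xz zl => h z xz zl).
rewrite en ler_pdivlMr // -pmulrn.
lra.
Qed.

Lemma lowb (V M K : R) : 0 < K -> 1 <= M -> M <= K * V ->
  kc R a / K <= kc R a * V * M `^ (a - 2).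
Proof.
move=> K0 M1 MK.
have M0 : 0 < M by lra.
have KV0 : 0 < K * V by lra.
have V0 : 0 < V by move: KV0; rewrite pmulr_rgt0.
have c0 := kc_gt0 R a a1.
have hM : M `^ (-1) <= M `^ (a - 2).
  apply: (ler_powR M1). have := a1; lra.
rewrite powR_inv1 in hM; last by lra.
have hinv : (K * V)^-1 <= M^-1 by rewrite lef_pV2 ?posrE.
have e : kc R a / K = kc R a * V * (K * V)^-1.
  by field; apply/andP; split; apply/negP => /eqP h; lra.
rewrite e; apply: ler_wpM2l; first by apply: mulr_ge0; lra.
exact: le_trans hinv hM.
Qed.

Lemma step_neg (s z : int) : (2 * z + 1 - s < 0)%R ->
  kc R a * (s - 2 * z - 1)%:~R * ((`|z + 1| + `|s - z| + 1)%:~R) `^ (a - 2)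
  <= phi R a s z - phi R a s (z + 1).
Proof.
move=> hneg.
have h := step_pos R a a1 a2 s (s - z - 1) ltac:(lia).
rewrite (_ : 2 * (s - z - 1) + 1 - s = s - 2 * z - 1) in h; last by ring.
rewrite (_ : s - z - 1 + 1 = s - z) in h; last by ring.
rewrite /phi in h.
rewrite (_ : s - (s - z) = z) in h; last by ring.
rewrite (_ : s - (s - z - 1) = z + 1) in h; last by ring.
rewrite (_ : `|s - z| + `|z + 1| + 1 = `|z + 1| + `|s - z| + 1) in h; last by ring.
move: h; rewrite /phi (_ : s - z - 1 = s - (z + 1)); last by ring.
lra.
Qed.

Lemma lowbZ (V M : int) (K : nat) : (0 < K)%N -> (1 <= M)%R -> (M <= K%:Z * V)%R ->
  kc R a / K%:R <= kc R a * V%:~R * (M%:~R) `^ (a - 2).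
Proof.
move=> K0 M1 MK; apply: lowb; first by rewrite ltr0n.
  by rewrite ler1z.
by rewrite -[K%:R]/((K%:Z)%:~R) -intrM ler_int.
Qed.

Lemma window2 (C0 B u v : R) : `|u - B| <= C0 -> `|v - B| <= C0 -> v - u <= 2 * C0.
Proof. rewrite !ler_norml => /andP[h1 h2] /andP[h3 h4]; lra. Qed.

Lemma countA (C0 : R) (n : nat) (s : int) (B : R) : 0 < C0 ->
  zsum n (fun x => ind R ((`|s| < `|x|)%R && (`|phi R a s x - B| <= C0)))
  <= 2 * (2 * (2 * C0 / (kc R a / 2)) + 1).
Proof.
move=> C00.
have c0 := kc_gt0 R a a1.
set D := 2 * C0 / (kc R a / 2).
have D0 : 0 <= D by rewrite /D; apply: divr_ge0; [lra | apply: divr_ge0; lra].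
set Q := fun x => (`|s| < `|x|)%R && (`|phi R a s x - B| <= C0).
apply: (@le_trans _ _ (zsum n (fun x => ind R (Q x && (0 < x)%R) + ind R (Q x && (x < 0)%R)))).
  apply: zsum_le => x; rewrite /ind /Q.
  case: ifP => // /andP[hx _]; case: ifP => h1; case: ifP => h2; move: h1 h2; try lra.
  lia.
rewrite zsumD (_ : 2 * (2 * D + 1) = (2 * D + 1) + (2 * D + 1)); last by ring.
apply: lerD.
  apply: zsum_diam => // x y /andP[/andP[hx wx] x0] /andP[/andP[hy wy] y0] xy.
  apply: (@diam_g (phi R a s)) => //; first by apply: divr_gt0; lra.
    move=> z xz zy.
    have hz := step_pos R a a1 a2 s z ltac:(lia).
    apply: le_trans hz.
    apply: lowbZ => //; lia.
  exact: (window2 _ _ _ _ wx wy).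
apply: zsum_diam => // x y /andP[/andP[hx wx] x0] /andP[/andP[hy wy] y0] xy.
apply: (@diam_g (fun z => - phi R a s z)) => //; first by apply: divr_gt0; lra.
  move=> z xz zy.
  have hz := step_neg s z ltac:(lia).
  rewrite opprK addrC.
  apply: le_trans hz.
  apply: lowbZ => //; lia.
have := window2 _ _ _ _ wy wx; lra.
Qed.

End T.


Section U.
Variable R : realType.
Variable a : R.
Hypothesis a1 : 1 < a.
Hypothesis a2 : a < 2.

Definition Lam (N1 N3 : nat) : R := ((minn N1 N3)%:R : R) `^ (1 - a / 2).

Lemma Lam_ge1 N1 N3 : (1 <= N1)%N -> (1 <= N3)%N -> 1 <= Lam N1 N3.
Proof.
move=> h1 h3; rewrite /Lam.
have L1 : (1 : R) <= (minn N1 N3)%:R by rewrite ler1n; lia.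
have := @ler_powR R _ L1 0 (1 - a / 2).
rewrite powRr0; apply; have := a2; lra.
Qed.

Lemma Lam_inv N1 N3 : (1 <= N1)%N -> (1 <= N3)%N ->
  Lam N1 N3 * ((minn N1 N3)%:R : R) `^ (a - 2) = (Lam N1 N3)^-1.
Proof.
move=> h1 h3; rewrite /Lam.
have L0 : ((minn N1 N3)%:R : R) != 0 by rewrite pnatr_eq0; lia.
rewrite -powRD; last by apply/implyP => _.
rewrite -powRN; congr (_ `^ _); field; done.
Qed.

Lemma farstep (N1 N3 : nat) (s z V : int) : (1 <= N1)%N -> (1 <= N3)%N ->
  (`|z| <= N1%:Z)%R -> (`|z + 1| <= N1%:Z)%R -> (`|s - z| <= N3%:Z)%R -> (`|s - z - 1| <= N3%:Z)%R ->
  `|2 * z + 1 - s| = V -> Lam N1 N3 <= V%:~R ->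
  kc R a / (12 * Lam N1 N3) <= kc R a * V%:~R * ((`|z + 1| + `|s - z| + 1)%:~R) `^ (a - 2).
Proof.
move=> h1 h3 hz hz1 hsz hsz1 eV hLV.
have c0 := kc_gt0 R a a1.
have Lg1 := Lam_ge1 N1 N3 h1 h3.
set L := minn N1 N3.
have [small|big] := ltP (`|s|) (8 * L%:Z).
  set M := ((`|z + 1| + `|s - z| + 1)%:~R : R).
  have M1 : 1 <= M by rewrite /M ler1z; lia.
  have ML : M <= 12 * L%:R.
    rewrite /M (_ : 12 * L%:R = (12 * L%:Z)%:~R :> R); last by rewrite intrM.
    rewrite ler_int; lia.
  have hM : (12 * L%:R) `^ (a - 2) <= M `^ (a - 2).
    by apply: powR_anti => //; [lra | have := a2; lra].
  rewrite powRM in hM; [|lra| by rewrite ler0n].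
  have h12 : (12 : R) `^ (-1) <= 12 `^ (a - 2).
    by apply: ler_powR; [lra | have := a1; lra].
  rewrite powR_inv1 in h12; last by lra.
  have LL := Lam_inv N1 N3 h1 h3.
  have Lp : 0 < L%:R `^ (a - 2) :> R by apply: powR_gt0; rewrite ltr0n; lia.
  have key : (12 * Lam N1 N3)^-1 <= V%:~R * M `^ (a - 2).
    apply: (@le_trans _ _ (Lam N1 N3 * (12 `^ (-1) * L%:R `^ (a - 2)))).
      rewrite powR_inv1; last by lra.
      rewrite mulrCA LL invfM; lra.
    apply: ler_pM => //; first by lra.
    apply: le_trans hM; rewrite powR_inv1; last by lra.
    rewrite ler_wpM2r //; lra.
  rewrite -mulrA; apply: ler_wpM2l; first lra.
  exact: key.
apply: (@le_trans _ _ (kc R a / 4%:R)).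
  apply: ler_wpM2l; first lra.
  rewrite lef_pV2 ?posrE //; lra.
apply: lowbZ => //; lia.
Qed.

Lemma int2 (x y s : int) : ((2 * y - s)%:~R - (2 * x - s)%:~R : R) = (y - x)%:~R + (y - x)%:~R.
Proof. by rewrite -!intrB -intrD; congr (_%:~R); ring. Qed.

Lemma countB (C0 : R) (n : nat) (s : int) (B : R) (N1 N3 : nat) : 0 < C0 ->
  (1 <= N1)%N -> (1 <= N3)%N ->
  zsum n (fun x => ind R ((`|x| <= N1%:Z)%R && (`|s - x| <= N3%:Z)%R && (`|phi R a s x - B| <= C0)))
  <= (5 + 96 * C0 / kc R a) * Lam N1 N3.
Proof.
move=> C00 h1 h3.
have c0 := kc_gt0 R a a1.
have Lg1 := Lam_ge1 N1 N3 h1 h3.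
have [L eL] : exists L, L = Lam N1 N3 by eexists.
rewrite -eL in Lg1 *.
have [D eD] : exists D, D = 24 * C0 / kc R a * L by eexists.
have D0 : 0 <= D.
  rewrite eD; apply: mulr_ge0; last lra.
  apply: divr_ge0; lra.
have Dd : 0 < kc R a / (12 * L) by apply: divr_gt0; lra.
have eD' : 2 * C0 / (kc R a / (12 * L)) = D.
  rewrite eD; field; apply/andP; split; apply/negP => /eqP; lra.
pose Q := fun x => (`|x| <= N1%:Z)%R && (`|s - x| <= N3%:Z)%R && (`|phi R a s x - B| <= C0).
pose u := fun x : int => ((2 * x - s)%:~R : R).
apply: (@le_trans _ _ (zsum n (fun x => ind R (Q x && (`|u x| <= L)) +
   ind R (Q x && (L < u x)) + ind R (Q x && (u x < - L))))).
  apply: zsum_le => x; rewrite /ind -/(Q x).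
  case: (Q x) => /=; last lra.
  case: ifP => hn; case: ifP => hp; case: ifP => hm; try lra.
  move: hn; rewrite ler_norml => /negbT; rewrite negb_and -!ltNge.
  move: hp hm => /negbT; rewrite -leNgt => hp /negbT; rewrite -leNgt => hm.
  case/orP => h; lra.
rewrite !zsumD.
have near : zsum n (fun x => ind R (Q x && (`|u x| <= L))) <= 2 * L + 1.
  apply: zsum_diam; first lra.
  move=> x y /andP[_ hx] /andP[_ hy] xy.
  move: hx hy; rewrite /u !ler_norml => /andP[hx1 hx2] /andP[hy1 hy2].
  have := int2 x y s; lra.
have far : forall sg : bool, zsum n (fun x => ind R (Q x && (if sg then L < u x else u x < - L))) <= 2 * D + 1.
  move=> sg; apply: zsum_diam => // x y /andP[hx fx] /andP[hy fy] xy.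
  move: hx hy; rewrite /Q => /andP[/andP[bx1 bx3] wx] /andP[/andP[by1 by3] wy].
  rewrite -eD'.
  case: sg fx fy => fx fy.
    have ux : (0 < 2 * x - s)%R by rewrite -(ltr0z R); rewrite /u in fx; lra.
    apply: (@diam_g R a a1 a2 (phi R a s)) => //.
      move=> z xz zy.
      have hz := step_pos R a a1 a2 s z ltac:(clear -xz ux; lia).
      apply: le_trans hz.
      rewrite eL; apply: (@farstep N1 N3 s z (2 * z + 1 - s)); [done|done|(clear -bx1 by1 bx3 by3 xz zy ux; lia)|(clear -bx1 by1 bx3 by3 xz zy ux; lia)|(clear -bx1 by1 bx3 by3 xz zy ux; lia)|(clear -bx1 by1 bx3 by3 xz zy ux; lia)|(clear -bx1 by1 bx3 by3 xz zy ux; lia)|].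
      rewrite -eL; apply: (le_trans (ltW fx)); rewrite /u ler_int; clear -xz; lia.
    exact: (@window2 R _ _ _ _ wx wy).
  have uy : (2 * y - s < 0)%R by rewrite -(ltrz0 R); rewrite /u in fy; lra.
  apply: (@diam_g R a a1 a2 (fun z => - phi R a s z)) => //.
    move=> z xz zy.
    have hz := step_neg R a a1 a2 s z ltac:(clear -zy uy; lia).
    rewrite opprK addrC.
    apply: le_trans hz.
    rewrite eL; apply: (@farstep N1 N3 s z (s - 2 * z - 1)); [done|done|(clear -bx1 by1 bx3 by3 xz zy uy; lia)|(clear -bx1 by1 bx3 by3 xz zy uy; lia)|(clear -bx1 by1 bx3 by3 xz zy uy; lia)|(clear -bx1 by1 bx3 by3 xz zy uy; lia)|(clear -bx1 by1 bx3 by3 xz zy uy; lia)|].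
    have h : L < (s - 2 * y)%:~R.
      rewrite (_ : s - 2 * y = - (2 * y - s)); last by ring.
      by rewrite intrN; rewrite /u in fy; lra.
    rewrite -eL; apply: (le_trans (ltW h)); rewrite ler_int; clear -zy; lia.
  have := @window2 R _ _ _ _ wy wx; lra.
have fp := far true; have fm := far false.
rewrite /= in fp fm.
have e96 : 96 * C0 / kc R a * L = 4 * D by rewrite eD; field; apply/negP => /eqP; lra.
rewrite mulrDl e96; lra.
Qed.

End U.


Section V.
Variable R : realType.

Lemma eq_zsum n (f g : int -> R) : (forall x, f x = g x) -> zsum n f = zsum n g.
Proof. by move=> h; rewrite /zsum; apply: eq_bigr => i _; apply: h. Qed.

Lemma zsum_swap3 a b c (F : int -> int -> int -> R) :
  zsum a (fun x => zsum b (fun y => zsum c (fun z => F x y z))) =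
  zsum c (fun z => zsum a (fun x => zsum b (fun y => F x y z))).
Proof.
rewrite (@eq_zsum a _ (fun x => zsum c (fun z => zsum b (fun y => F x y z)))).
  by rewrite zsum_swap.
by move=> x; rewrite zsum_swap.
Qed.

Lemma zsum_swap4 a b c d (F : int -> int -> int -> int -> R) :
  zsum a (fun x => zsum b (fun y => zsum c (fun u => zsum d (fun v => F x y u v)))) =
  zsum c (fun u => zsum d (fun v => zsum a (fun x => zsum b (fun y => F x y u v)))).
Proof.
rewrite (@eq_zsum a _ (fun x => zsum c (fun u => zsum b (fun y => zsum d (fun v => F x y u v))))); last first.
  by move=> x; rewrite zsum_swap.
rewrite zsum_swap; apply: eq_zsum => u.
by rewrite zsum_swap3.
Qed.

Lemma ind_ge0 b : 0 <= ind R b.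
Proof. by rewrite /ind; case: b. Qed.

Lemma ind_le1 b : ind R b <= 1.
Proof. by rewrite /ind; case: b. Qed.

Lemma sum_ind_mul n (c : R) (e : int) : 0 <= c ->
  zsum n (fun x => c * ind R (x == e)) <= c.
Proof.
move=> c0; rewrite zsumZ; have := zsum_single R n e.
move=> h; rewrite -[X in _ <= X]mulr1; exact: ler_wpM2l.
Qed.

Lemma three_n (n : nat) : (1 <= n)%N -> ((2 * n).+1%:R : R) <= 3 * n%:R.
Proof. move=> h; rewrite -natr1 natrM; have : (1 : R) <= n%:R by rewrite ler1n. lra. Qed.

End V.

Section W.
Variable R : realType.
Variables (alpha C0 m : R) (N N1 N2 N3 : nat).

Local Notation H := (Tr alpha C0 m N N1 N2 N3).

Lemma Hcases k k1 k2 k3 : H k k1 k2 k3 = 0 \/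
  [/\ H k k1 k2 k3 = 1, (absz (k1 + k3)%R < absz k2)%N, k = k1 - k2 + k3,
      `| apow alpha k1 - apow alpha k2 + apow alpha k3 - apow alpha k - m | <= C0 &
      [/\ (absz k1 <= N1)%N, (absz k3 <= N3)%N, (absz k <= N)%N & (absz k2 <= N2)%N]].
Proof.
rewrite /Tr /Tb /inS.
case: ifP => hc; last by left; rewrite mul0r.
case: ifP => hs; last by left; rewrite mulr0.
right; move: hs => /andP[/eqP ek /andP[_ /andP[_ /andP[lev /andP[bk /andP[b1 /andP[b2 b3]]]]]]].
by split => //; rewrite mulr1.
Qed.

Lemma H_ge0 k k1 k2 k3 : 0 <= H k k1 k2 k3.
Proof. by case: (Hcases k k1 k2 k3) => [->|[-> _ _ _ _]]. Qed.

Lemma H_le1 k k1 k2 k3 : H k k1 k2 k3 <= 1.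
Proof. by case: (Hcases k k1 k2 k3) => [->|[-> _ _ _ _]]. Qed.

Lemma H_sq k k1 k2 k3 : H k k1 k2 k3 ^+ 2 = H k k1 k2 k3.
Proof. by case: (Hcases k k1 k2 k3) => [->|[-> _ _ _ _]]; rewrite expr2 ?mul0r ?mul1r. Qed.

Lemma HA k k1 k2 k3 : H k k1 k2 k3 <=
  ind R ((`|k1 + k3| < `|k2|)%R &&
         (`|phi R alpha (k1 + k3) k2 - (apow alpha k1 + apow alpha k3 - m)| <= C0))
  * ind R (k == k1 + k3 - k2).
Proof.
case: (Hcases k k1 k2 k3) => [->|[-> hc ek lev _]].
  by apply: mulr_ge0; apply: ind_ge0.
rewrite /ind (_ : k == k1 + k3 - k2); last by apply/eqP; rewrite ek; ring.
rewrite (_ : (`|k1 + k3| < `|k2|)%R); last by clear -hc; lia.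
rewrite /phi (_ : k1 + k3 - k2 = k); last by rewrite ek; ring.
rewrite (_ : apow alpha k2 + apow alpha k - (apow alpha k1 + apow alpha k3 - m) =
   - (apow alpha k1 - apow alpha k2 + apow alpha k3 - apow alpha k - m)); last by ring.
by rewrite normrN lev mulr1.
Qed.

Lemma HB k k1 k2 k3 : H k k1 k2 k3 <=
  ind R ((`|k1| <= N1%:Z)%R && (`|(k + k2) - k1| <= N3%:Z)%R &&
         (`|phi R alpha (k + k2) k1 - (apow alpha k2 + apow alpha k + m)| <= C0))
  * ind R (k3 == (k + k2) - k1).
Proof.
case: (Hcases k k1 k2 k3) => [->|[-> hc ek lev [b1 b3 _ _]]].
  by apply: mulr_ge0; apply: ind_ge0.
have e3 : k + k2 - k1 = k3 by rewrite ek; ring.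
rewrite /ind e3 eqxx.
rewrite (_ : (`|k1| <= N1%:Z)%R); last by clear -b1; lia.
rewrite (_ : (`|k3| <= N3%:Z)%R); last by clear -b3; lia.
rewrite /phi e3.
rewrite (_ : apow alpha k1 + apow alpha k3 - (apow alpha k2 + apow alpha k + m) =
   apow alpha k1 - apow alpha k2 + apow alpha k3 - apow alpha k - m); last by ring.
by rewrite lev mulr1.
Qed.

Lemma HC k k1 k2 k3 : H k k1 k2 k3 <= ind R (k1 == k + k2 - k3).
Proof.
case: (Hcases k k1 k2 k3) => [->|[-> hc ek lev _]]; first exact: ind_ge0.
by rewrite /ind (_ : k1 == k + k2 - k3) //; apply/eqP; rewrite ek; ring.
Qed.

Lemma HD k k1 k2 k3 : H k k1 k2 k3 <= ind R (k3 == k - k1 + k2).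
Proof.
case: (Hcases k k1 k2 k3) => [->|[-> hc ek lev _]]; first exact: ind_ge0.
by rewrite /ind (_ : k3 == k - k1 + k2) //; apply/eqP; rewrite ek; ring.
Qed.

End W.

Theorem lemma2p15 (R : realType) (alpha C0 : R) :
  1 < alpha -> alpha < 2 -> 0 < C0 ->
  exists C : R, 0 < C /\
  forall (N N1 N2 N3 : nat) (m : R),
    dyadic N -> dyadic N1 -> dyadic N2 -> dyadic N3 ->
    (N1 <= N)%N -> (N2 <= N)%N -> (N3 <= N)%N ->
    let H := Tr alpha C0 m N N1 N2 N3 in
    (* ||1 T||^2_{k k1 k2 k3} <~ N1 N3 *)
    zsum N (fun k => zsum N1 (fun k1 => zsum N2 (fun k2 => zsum N3 (fun k3 =>
        (H k k1 k2 k3) ^+ 2))))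
      <= C * (N1%:R * N3%:R)
    (* ||1 T||^2_{k k2 -> k1 k3} <~ (N1 /\ N3)^(1 - alpha/2) *)
    /\ (forall z : int -> int -> R,
        zsum N1 (fun k1 => zsum N3 (fun k3 =>
          (zsum N (fun k => zsum N2 (fun k2 => H k k1 k2 k3 * z k k2))) ^+ 2))
        <= C * ((minn N1 N3)%:R `^ (1 - alpha / 2))
             * zsum N (fun k => zsum N2 (fun k2 => (z k k2) ^+ 2)))
    (* ||1 T||^2_{k1 -> k k2 k3} <~ N3 *)
    /\ (forall z : int -> R,
        zsum N (fun k => zsum N2 (fun k2 => zsum N3 (fun k3 =>
          (zsum N1 (fun k1 => H k k1 k2 k3 * z k1)) ^+ 2)))
        <= C * N3%:R * zsum N1 (fun k1 => (z k1) ^+ 2))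
    (* ||1 T||^2_{k3 -> k k1 k2} <~ N1 *)
    /\ (forall z : int -> R,
        zsum N (fun k => zsum N1 (fun k1 => zsum N2 (fun k2 =>
          (zsum N3 (fun k3 => H k k1 k2 k3 * z k3)) ^+ 2)))
        <= C * N1%:R * zsum N3 (fun k3 => (z k3) ^+ 2)).
Proof.
move=> a1 a2 C00.
have c0 := kc_gt0 R alpha a1.
pose KA := 2 * (2 * (2 * C0 / (kc R alpha / 2)) + 1).
pose KB := 5 + 96 * C0 / kc R alpha.
have KA1 : 1 <= KA.
  rewrite /KA; have : 0 <= 2 * C0 / (kc R alpha / 2) by apply: divr_ge0; lra.
  lra.
have KB1 : 1 <= KB.
  rewrite /KB; have : 0 <= 96 * C0 / kc R alpha by apply: divr_ge0; lra.
  lra.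
exists (9 * KA * (1 + KB)); split; first by apply: mulr_gt0; lra.
move=> N N1 N2 N3 m dN dN1 dN2 dN3 h1 h2 h3 H.
have dy : forall n, dyadic n -> (1 <= n)%N by move=> n [j ->]; rewrite expn_gt0.
have n1 := dy _ dN1; have n3 := dy _ dN3.
have CA : forall k1 k3, zsum N (fun k => zsum N2 (fun k2 => H k k1 k2 k3)) <= KA.
  move=> k1 k3; rewrite zsum_swap.
  apply: le_trans (countA R alpha a1 a2 C0 N2 (k1 + k3) (apow alpha k1 + apow alpha k3 - m) C00).
  apply: zsum_le => k2.
  apply: le_trans ((@sum_ind_mul R N _ (k1 + k3 - k2) (ind_ge0 R _))).
  apply: zsum_le => k; exact: HA.
have CB : forall k k2, zsum N1 (fun k1 => zsum N3 (fun k3 => H k k1 k2 k3)) <= KB * Lam R alpha N1 N3.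
  move=> k k2.
  have hB := (countB R alpha a1 a2 C0 N1 (k + k2) (apow alpha k2 + apow alpha k + m) N1 N3 C00 n1 n3). rewrite -/KB in hB. apply: le_trans hB.
  apply: zsum_le => k1.
  apply: le_trans ((@sum_ind_mul R N3 _ (k + k2 - k1) (ind_ge0 R _))).
  apply: zsum_le => k3; exact: HB.
have CC : forall k k2 k3, zsum N1 (fun k1 => H k k1 k2 k3) <= 1.
  move=> k k2 k3; apply: le_trans (zsum_single R N1 (k + k2 - k3)).
  apply: zsum_le => k1; exact: HC.
have CD : forall k k1 k2, zsum N3 (fun k3 => H k k1 k2 k3) <= 1.
  move=> k k1 k2; apply: le_trans (zsum_single R N3 (k - k1 + k2)).
  apply: zsum_le => k3; exact: HD.
have Hge0 : forall k k1 k2 k3, 0 <= H k k1 k2 k3 by move=> *; exact: H_ge0.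
have Hsq : forall k k1 k2 k3, H k k1 k2 k3 ^+ 2 = H k k1 k2 k3 by move=> *; exact: H_sq.
have Lg1 : 1 <= Lam R alpha N1 N3 by exact: Lam_ge1.
clearbody H KA KB.
have t1 := three_n R N1 n1; have t3 := three_n R N3 n3.
have N1p : (1 : R) <= N1%:R by rewrite ler1n.
have N3p : (1 : R) <= N3%:R by rewrite ler1n.
split.
  have e : zsum N (fun k => zsum N1 (fun k1 => zsum N2 (fun k2 => zsum N3 (fun k3 => H k k1 k2 k3 ^+ 2))))
         = zsum N1 (fun k1 => zsum N3 (fun k3 => zsum N (fun k => zsum N2 (fun k2 => H k k1 k2 k3)))).
    rewrite zsum_swap; apply: eq_zsum => k1.
    rewrite zsum_swap3; apply: eq_zsum => k3; apply: eq_zsum => k; apply: eq_zsum => k2.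
    exact: Hsq.
  rewrite e.
  apply: (@le_trans _ _ (zsum N1 (fun _ => zsum N3 (fun _ => KA)))).
    apply: zsum_le => k1; apply: zsum_le => k3; exact: CA.
  rewrite !zsum_cst.
  apply: (@le_trans _ _ (3 * N1%:R * (3 * N3%:R * KA))).
    apply: ler_pM => //; first by apply: mulr_ge0; lra.
    apply: ler_wpM2r; lra.
  rewrite (_ : 3 * N1%:R * (3 * N3%:R * KA) = 9 * KA * (N1%:R * N3%:R)); last by ring.
  apply: ler_wpM2r; first by apply: mulr_ge0; lra.
  rewrite -[X in X <= _]mulr1; apply: ler_wpM2l; lra.
split.
  move=> z.
  rewrite -/(Lam R alpha N1 N3).
  apply: (@le_trans _ _ (zsum N1 (fun k1 => zsum N3 (fun k3 =>
      KA * zsum N (fun k => zsum N2 (fun k2 => H k k1 k2 k3 * z k k2 ^+ 2)))))).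
    apply: zsum_le => k1; apply: zsum_le => k3.
    apply: le_trans (zCS2 R N N2 (fun k k2 => H k k1 k2 k3) z (fun k k2 => Hge0 k k1 k2 k3)) _.
    apply: ler_wpM2r; last exact: CA.
    apply: zsum_ge0 => k; apply: zsum_ge0 => k2; apply: mulr_ge0 => //; exact: sqr_ge0.
  have e : zsum N1 (fun k1 => zsum N3 (fun k3 =>
      KA * zsum N (fun k => zsum N2 (fun k2 => H k k1 k2 k3 * z k k2 ^+ 2))))
      = KA * zsum N (fun k => zsum N2 (fun k2 => z k k2 ^+ 2 * zsum N1 (fun k1 => zsum N3 (fun k3 => H k k1 k2 k3)))).
    rewrite (@eq_zsum R N1 _ (fun k1 => KA * zsum N3 (fun k3 => zsum N (fun k => zsum N2 (fun k2 => H k k1 k2 k3 * z k k2 ^+ 2))))); last first.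
      by move=> k1; rewrite zsumZ.
    rewrite zsumZ zsum_swap4; congr (_ * _).
    apply: eq_zsum => k; apply: eq_zsum => k2.
    rewrite -zsumZ; apply: eq_zsum => k1; rewrite -zsumZ; apply: eq_zsum => k3; ring.
  rewrite e.
  apply: (@le_trans _ _ (KA * zsum N (fun k => zsum N2 (fun k2 => z k k2 ^+ 2 * (KB * Lam R alpha N1 N3))))).
    apply: ler_wpM2l; first lra.
    apply: zsum_le => k; apply: zsum_le => k2.
    apply: ler_wpM2l; [exact: sqr_ge0 | exact: CB].
  rewrite (@eq_zsum R N _ (fun k => (KB * Lam R alpha N1 N3) * zsum N2 (fun k2 => z k k2 ^+ 2))); last first.
    by move=> k; rewrite -zsumZ; apply: eq_zsum => k2; ring.
  rewrite zsumZ.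
  have S0 : 0 <= zsum N (fun k => zsum N2 (fun k2 => z k k2 ^+ 2)).
    by apply: zsum_ge0 => k; apply: zsum_ge0 => k2; exact: sqr_ge0.
  rewrite mulrA; apply: ler_wpM2r => //.
  rewrite (_ : KA * (KB * Lam R alpha N1 N3) = (KA * KB) * Lam R alpha N1 N3); last by ring.
  apply: ler_wpM2r; first lra.
  have : KA * KB <= KA * (1 + KB) by apply: ler_wpM2l; lra.
  have : 0 <= KA * (1 + KB) by apply: mulr_ge0; lra.
  lra.
have fin : forall (P M : nat) (w : int -> R), (1 <= M)%N -> (forall x, 0 <= w x) ->
    zsum P (fun x => w x * ((2 * M).+1%:R * KA)) <= 9 * KA * (1 + KB) * M%:R * zsum P w.
  move=> P M w hM w0.
  have tM := three_n R M hM.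
  rewrite (@eq_zsum R P _ (fun x => ((2 * M).+1%:R * KA) * w x)); last by move=> x; ring.
  rewrite zsumZ; apply: ler_wpM2r; first exact: zsum_ge0.
  rewrite (_ : 9 * KA * (1 + KB) * M%:R = (3 * M%:R * KA) * (3 * (1 + KB))); last by ring.
  rewrite -[X in X <= _]mulr1.
  apply: ler_pM; [by apply: mulr_ge0; lra | lra | by apply: ler_wpM2r; lra | lra].
split.
  move=> z.
  apply: (@le_trans _ _ (zsum N (fun k => zsum N2 (fun k2 => zsum N3 (fun k3 =>
      zsum N1 (fun k1 => H k k1 k2 k3 * z k1 ^+ 2)))))).
    apply: zsum_le => k; apply: zsum_le => k2; apply: zsum_le => k3.
    apply: le_trans (zCS1 R N1 (fun k1 => H k k1 k2 k3) z (fun k1 => Hge0 k k1 k2 k3)) _.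
    rewrite -[X in _ <= X]mul1r; apply: ler_wpM2r; last exact: CC.
    apply: zsum_ge0 => k1; apply: mulr_ge0 => //; exact: sqr_ge0.
  rewrite zsum_swap4 zsum_swap.
  apply: (@le_trans _ _ (zsum N1 (fun k1 => z k1 ^+ 2 * ((2 * N3).+1%:R * KA)))); last first.
    by apply: fin => // x; exact: sqr_ge0.
  apply: zsum_le => k1.
  rewrite -zsum_cst.
  rewrite -zsumZ; apply: zsum_le => k3.
  rewrite (@eq_zsum R N _ (fun k => z k1 ^+ 2 * zsum N2 (fun k2 => H k k1 k2 k3))); last first.
    by move=> k; rewrite -zsumZ; apply: eq_zsum => k2; ring.
  rewrite zsumZ; apply: ler_wpM2l; [exact: sqr_ge0 | exact: CA].
move=> z.
apply: (@le_trans _ _ (zsum N (fun k => zsum N1 (fun k1 => zsum N2 (fun k2 =>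
    zsum N3 (fun k3 => H k k1 k2 k3 * z k3 ^+ 2)))))).
  apply: zsum_le => k; apply: zsum_le => k1; apply: zsum_le => k2.
  apply: le_trans (zCS1 R N3 (fun k3 => H k k1 k2 k3) z (fun k3 => Hge0 k k1 k2 k3)) _.
  rewrite -[X in _ <= X]mul1r; apply: ler_wpM2r; last exact: CD.
  apply: zsum_ge0 => k3; apply: mulr_ge0 => //; exact: sqr_ge0.
rewrite zsum_swap.
rewrite (@eq_zsum R N1 _ (fun k1 => zsum N3 (fun k3 => zsum N (fun k => zsum N2 (fun k2 => H k k1 k2 k3 * z k3 ^+ 2))))); last first.
  by move=> k1; rewrite zsum_swap3.
rewrite zsum_swap.
apply: (@le_trans _ _ (zsum N3 (fun k3 => z k3 ^+ 2 * ((2 * N1).+1%:R * KA)))); last first.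
  by apply: fin => // x; exact: sqr_ge0.
apply: zsum_le => k3.
rewrite -zsum_cst.
rewrite -zsumZ; apply: zsum_le => k1.
rewrite (@eq_zsum R N _ (fun k => z k3 ^+ 2 * zsum N2 (fun k2 => H k k1 k2 k3))); last first.
  by move=> k; rewrite -zsumZ; apply: eq_zsum => k2; ring.
rewrite zsumZ; apply: ler_wpM2l; [exact: sqr_ge0 | exact: CA].
Qed.
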